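(* Let $(G,{\bf p})$ be a framework in $\mathbb R^d$ whose configuration ${\bf p}$ has $d$-dimensional affine span. Let $\tilde V$ be a subset of the vertices, $\tilde G$ the subgraph induced on $\tilde V$, and $\tilde{\bf p}$ the corresponding subconfiguration, and suppose $(\tilde G,\tilde{\bf p})$ is universally rigid and the affine span of $\tilde{\bf p}$ has dimension $\tilde d<d$. Suppose that for each vertex $i\notin\tilde V$, the affine span of the points ${\bf p}_k$ for neighbours $k\in\tilde V$ of $i$ has dimension $\tilde d$. Write $\mathbb R^d=\mathbb R^{\tilde d}\times\mathbb R^{d-\tilde d}$ with the affine span of $\tilde{\bf p}$ equal to $\mathbb R^{\tilde d}\times\{{\bf p}_0\}$, and let $\pi:\mathbb R^d\to\mathbb R^{d-\tilde d}$ be the orthogonal projection onto the second factor, so $\pi$ maps all points of $\tilde{\bf p}$ to ${\bf p}_0$. Let $G'$ be the subgraph of $G$ induced on the vertices not in $\tilde V$. Then $(G,{\bf p})$ is universally rigid (respectively dimensionally rigid) if and only if the coned framework ${\bf p}_0*(G',\pi({\bf p}))$ in $\mathbb R^{d-\tilde d}$ is universally rigid (respectively dimensionally rigid).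
   Context: The coned framework ${\bf p}_0*(G',\pi({\bf p}))$ has a vertex at ${\bf p}_0$ joined by bars to every vertex $i$ of $G'$, vertex $i$ placed at $\pi({\bf p}_i)$, together with the bars of $G'$. A framework is universally rigid if every configuration in any $\mathbb R^D$ with the same bar lengths has all pairwise distances equal to those of the original; a framework with $d'$-dimensional affine span is dimensionally rigid if every configuration in any $\mathbb R^D$ with the same bar lengths has affine span of dimension at most $d'$. *)

(* Defs.v *)
From HB Require Import structures.
From mathcomp Require Import all_boot all_order all_algebra.
Set Implicit Arguments. Unset Strict Implicit. Unset Printing Implicit Defensive.
Import Order.TTheory GRing.Theory Num.Theory.
Local Open Scope ring_scope.

Definition sqd (R : rcfType) (D : nat) (x y : 'rV[R]_D) : R :=
  \sum_(k < D) (x 0 k - y 0 k) ^+ 2.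

(* dimension of the affine span of the points p i, i in A
   (= -1 for the empty set, otherwise the dimension of the linear span of
   all differences p i - p j, i, j in A) *)
Definition affdim (R : rcfType) (V : finType) (D : nat) (p : V -> 'rV[R]_D)
    (A : {set V}) : int :=
  if A == set0 then (-1)%R
  else (\rank (\sum_(i in A) \sum_(j in A) <<p i - p j>>)%MS)%:Z.

Definition equiv_on (R : rcfType) (V : finType) (e : rel V) (W : {set V})
    (D D' : nat) (p : V -> 'rV[R]_D) (q : V -> 'rV[R]_D') : Prop :=
  forall i j, i \in W -> j \in W -> e i j -> sqd (q i) (q j) = sqd (p i) (p j).

Definition univ_rigid (R : rcfType) (V : finType) (e : rel V) (W : {set V})
    (d : nat) (p : V -> 'rV[R]_d) : Prop :=
  forall (D : nat) (q : V -> 'rV[R]_D), equiv_on e W p q ->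
    forall i j, i \in W -> j \in W -> sqd (q i) (q j) = sqd (p i) (p j).

Definition dim_rigid (R : rcfType) (V : finType) (e : rel V) (W : {set V})
    (d : nat) (p : V -> 'rV[R]_d) : Prop :=
  forall (D : nat) (q : V -> 'rV[R]_D), equiv_on e W p q ->
    (affdim q W <= affdim p W)%R.

(* coned framework p0 * (G', pi(p)):  vertex None is the cone vertex, Some i
   (i not in Vt) the vertices of G' *)
Definition cone_rel (V : finType) (e : rel V) : rel (option V) :=
  fun x y => match x, y with
             | None, None => false
             | None, Some _ => true
             | Some _, None => true
             | Some i, Some j => e i j
             end.

Definition cone_verts (V : finType) (Vt : {set V}) : {set option V} :=
  [set x : option V | if x is Some i then i \notin Vt else true].

Definition cone_conf (R : rcfType) (V : finType) (dt d2 : nat)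
    (p0 : 'rV[R]_d2) (p : V -> 'rV[R]_(dt + d2)) : option V -> 'rV[R]_d2 :=
  fun x => if x is Some i then rsubmx (p i) else p0.

(* Main.v *)
Require Import Defs.
From HB Require Import structures.
From mathcomp Require Import all_boot all_order all_algebra.
From mathcomp Require Import ring lra zify.
Set Implicit Arguments. Unset Strict Implicit. Unset Printing Implicit Defensive.
Import Order.TTheory GRing.Theory Num.Theory.
Local Open Scope ring_scope.

Definition ip (R : rcfType) (n : nat) (u v : 'rV[R]_n) : R := (u *m v^T) 0 0.

Lemma ipE (R : rcfType) n (u v : 'rV[R]_n) : ip u v = \sum_k u 0 k * v 0 k.
Proof. by rewrite /ip mxE; apply: eq_bigr => k _; rewrite mxE. Qed.

Lemma sqdE (R : rcfType) n (x y : 'rV[R]_n) : sqd x y = ip (x - y) (x - y).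
Proof. by rewrite /sqd ipE; apply: eq_bigr => k _; rewrite expr2 !mxE. Qed.

Lemma ipC (R : rcfType) n (u v : 'rV[R]_n) : ip u v = ip v u.
Proof. by rewrite !ipE; apply: eq_bigr => k _; rewrite mulrC. Qed.

Lemma ipDl (R : rcfType) n (u v w : 'rV[R]_n) : ip (u + v) w = ip u w + ip v w.
Proof. by rewrite /ip mulmxDl mxE. Qed.

Lemma ipNl (R : rcfType) n (u w : 'rV[R]_n) : ip (- u) w = - ip u w.
Proof. by rewrite /ip mulNmx mxE. Qed.

Lemma ipBl (R : rcfType) n (u v w : 'rV[R]_n) : ip (u - v) w = ip u w - ip v w.
Proof. by rewrite ipDl ipNl. Qed.

Lemma ipDr (R : rcfType) n (u v w : 'rV[R]_n) : ip w (u + v) = ip w u + ip w v.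
Proof. by rewrite ipC ipDl !(ipC w). Qed.

Lemma ipBr (R : rcfType) n (u v w : 'rV[R]_n) : ip w (u - v) = ip w u - ip w v.
Proof. by rewrite ipC ipBl !(ipC w). Qed.

Lemma ip0l (R : rcfType) n (w : 'rV[R]_n) : ip 0 w = 0.
Proof. by rewrite /ip mul0mx mxE. Qed.

Lemma ip0r (R : rcfType) n (w : 'rV[R]_n) : ip w 0 = 0.
Proof. by rewrite ipC ip0l. Qed.

Lemma ipMl (R : rcfType) m n (u : 'rV[R]_m) (A : 'M[R]_(m, n)) v :
  ip (u *m A) v = ip u (v *m A^T).
Proof. by rewrite /ip trmx_mul trmxK mulmxA. Qed.

Lemma ipMr (R : rcfType) m n (u : 'rV[R]_m) (A : 'M[R]_(m, n)) v :
  ip v (u *m A) = ip (v *m A^T) u.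
Proof. by rewrite ipC ipMl ipC. Qed.

Lemma ip_row_mx (R : rcfType) m n (a c : 'rV[R]_m) (b d : 'rV[R]_n) :
  ip (row_mx a b) (row_mx c d) = ip a c + ip b d.
Proof. by rewrite /ip tr_row_mx mul_row_col mxE. Qed.

Lemma ip_self0 (R : rcfType) n (u : 'rV[R]_n) : ip u u = 0 -> u = 0.
Proof.
rewrite ipE => H; apply/rowP => k; rewrite mxE; apply/eqP; rewrite -sqrf_eq0 expr2.
by apply/eqP; apply: (psumr_eq0P _ H) => // i _; rewrite -expr2 sqr_ge0.
Qed.

Lemma mulmx_tr0 (R : rcfType) m n (A : 'M[R]_(m, n)) : A *m A^T = 0 -> A = 0.
Proof.
move=> H; apply/row_matrixP => i; rewrite row0; apply: ip_self0.
have := congr1 (fun M : 'M[R]_m => M i i) H; rewrite !mxE => <-; rewrite ipE.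
by apply: eq_bigr => k _; rewrite !mxE.
Qed.

Lemma sqd_row_mx (R : rcfType) m n (a c : 'rV[R]_m) (b d : 'rV[R]_n) :
  sqd (row_mx a b) (row_mx c d) = sqd a c + sqd b d.
Proof. by rewrite !sqdE opp_row_mx add_row_mx ip_row_mx. Qed.

Lemma sqd_split (R : rcfType) m n (x y : 'rV[R]_(m + n)) :
  sqd x y = sqd (lsubmx x) (lsubmx y) + sqd (rsubmx x) (rsubmx y).
Proof. by rewrite -sqd_row_mx !hsubmxK. Qed.

Lemma sqdC (R : rcfType) n (x y : 'rV[R]_n) : sqd x y = sqd y x.
Proof. by rewrite !sqdE -opprB ipNl ipC ipNl opprK. Qed.

Lemma sqdxx (R : rcfType) n (x : 'rV[R]_n) : sqd x x = 0.
Proof. by rewrite sqdE subrr ip0l. Qed.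

Lemma gram (R : rcfType) m n d (X : 'M[R]_(m, n)) (T : 'M[R]_(m, d)) :
  X *m X^T = T *m T^T -> row_full T ->
  exists Psi : 'M[R]_(d, n), T *m Psi = X /\ Psi *m Psi^T = 1%:M.
Proof.
move=> HG /row_fullP [L HL].
have HLT : T^T *m L^T = 1%:M by rewrite -trmx_mul HL trmx1.
have h1 : X *m (T *m (L *m X))^T = T *m T^T.
  by rewrite !trmx_mul !mulmxA HG -(mulmxA T) HLT mulmx1.
have h2 : (T *m (L *m X)) *m X^T = T *m T^T.
  by rewrite !mulmxA -(mulmxA (T *m L)) HG !mulmxA -(mulmxA T L T) HL mulmx1.
have h3 : (T *m (L *m X)) *m (T *m (L *m X))^T = T *m T^T.
  rewrite !trmx_mul !mulmxA -(mulmxA (T *m L) X) HG !mulmxA -(mulmxA T L T) HL mulmx1.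
  by rewrite -(mulmxA T T^T L^T) HLT mulmx1.
exists (L *m X); split; last first.
  by rewrite trmx_mul !mulmxA -(mulmxA L X) HG !mulmxA HL mul1mx HLT.
apply/eqP; rewrite eq_sym -subr_eq0; apply/eqP; apply: mulmx_tr0.
by rewrite linearB /= mulmxBl !mulmxBr h1 h2 h3 HG !subrr.
Qed.

Definition spn (R : rcfType) (V : finType) (D : nat) (f : V -> 'rV[R]_D)
  (A : {set V}) : 'M[R]_D := (\sum_(i in A) \sum_(j in A) <<f i - f j>>)%MS.

Lemma affdimE (R : rcfType) (V : finType) (D : nat) (f : V -> 'rV[R]_D) (A : {set V}) :
  A != set0 -> affdim f A = (\rank (spn f A))%:Z.
Proof. by rewrite /affdim => /negbTE ->. Qed.

Lemma span_sub (R : rcfType) (V : finType) (D : nat) (f : V -> 'rV[R]_D) (A : {set V}) k l :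
  k \in A -> l \in A -> (f k - f l <= spn f A)%MS.
Proof.
move=> hk hl; apply: (sumsmx_sup k) => //; apply: (sumsmx_sup l) => //.
by rewrite genmxE.
Qed.

Lemma span_le (R : rcfType) (V : finType) (D : nat) (f : V -> 'rV[R]_D) (A : {set V}) m
  (W : 'M[R]_(m, D)) :
  (forall k l, k \in A -> l \in A -> (f k - f l <= W)%MS) -> (spn f A <= W)%MS.
Proof.
move=> H; apply/sumsmx_subP => k hk; apply/sumsmx_subP => l hl.
by rewrite genmxE; apply: H.
Qed.

Lemma span_mul_le (R : rcfType) (V : finType) (D n : nat) (f : V -> 'rV[R]_D) (A : {set V}) m
  (M : 'M[R]_(D, n)) (W : 'M[R]_(m, n)) :
  (forall k l, k \in A -> l \in A -> ((f k - f l) *m M <= W)%MS) ->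
  (spn f A *m M <= W)%MS.
Proof.
move=> H; rewrite sumsmxMr_gen; apply/sumsmx_subP => k hk.
rewrite genmxE sumsmxMr_gen; apply/sumsmx_subP => l hl.
by rewrite genmxE (eqmxMr M (genmxE _)); apply: H.
Qed.

Lemma ortho_full (R : rcfType) n m (S : 'M[R]_(m, n)) (w : 'rV[R]_n) :
  (1%:M <= S)%MS -> (S <= kermx w^T)%MS -> w = 0.
Proof.
move=> h1 h2; have /sub_kermxP := submx_trans h1 h2.
by rewrite mul1mx => /(congr1 trmx); rewrite trmxK trmx0.
Qed.

Lemma diff_row (R : rcfType) m n (x y : 'rV[R]_(m + n)) :
  x - y = row_mx (lsubmx x - lsubmx y) (rsubmx x - rsubmx y).
Proof. by rewrite -add_row_mx -opp_row_mx !hsubmxK. Qed.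

Lemma affdim_nonneg (R : rcfType) (V : finType) (D : nat) (f : V -> 'rV[R]_D)
  (A : {set V}) (k : nat) : affdim f A = k%:Z -> A != set0 /\ \rank (spn f A) = k.
Proof.
rewrite /affdim; case: eqP => // _ [h]; split => //.
Qed.

Lemma full_span (R : rcfType) (V : finType) dt d2 (p : V -> 'rV[R]_(dt + d2))
  (A : {set V}) (p0 : 'rV[R]_d2) :
  (forall i, i \in A -> rsubmx (p i) = p0) -> affdim p A = dt%:Z ->
  (1%:M <= spn (fun i => lsubmx (p i)) A)%MS.
Proof.
move=> hp0 /affdim_nonneg [An0 hr].
rewrite sub1mx /row_full; apply/eqP/anti_leq; rewrite rank_leq_col /=.
rewrite -{1}hr; apply: leq_trans (mxrankM_maxl _ (row_mx (1%:M : 'M_dt) (0 : 'M_(dt, d2)))).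
apply: mxrankS; apply: span_le => k l hk hl.
rewrite diff_row (hp0 k hk) (hp0 l hl) subrr -[X in row_mx _ X](mulmx0 _ (lsubmx (p k) - lsubmx (p l))).
rewrite -{1}[lsubmx (p k) - _]mulmx1 -mul_mx_row; apply: submxMr.
exact: (span_sub (fun i => lsubmx (p i))).
Qed.

Lemma subBB (M : zmodType) (a b c : M) : (a - c) - (b - c) = a - b.
Proof. by rewrite opprB addrA subrK. Qed.

Lemma ipBB (R : rcfType) n (a b : 'rV[R]_n) :
  ip (a - b) (a - b) = ip a a - ip a b *+ 2 + ip b b.
Proof. rewrite !ipBl !ipBr (ipC b a); lra. Qed.

Lemma polar (R : rcfType) n m (a b : 'rV[R]_n) (c d : 'rV[R]_m) :
  ip (a - b) (a - b) = ip (c - d) (c - d) -> ip a a = ip c c -> ip b b = ip d d ->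
  ip a b = ip c d.
Proof. rewrite !ipBB => h1 h2 h3; lra. Qed.

Lemma ip_mx0 (R : rcfType) n (u w : 'rV[R]_n) : ip u w = 0 -> u *m w^T = 0.
Proof. by move=> h; apply/matrixP => a b; rewrite !ord1 [RHS]mxE -h. Qed.

Lemma decomp (R : rcfType) (V : finType) (e : rel V) dt d2
  (p : V -> 'rV[R]_(dt + d2)) (Vt : {set V}) (p0 : 'rV[R]_d2) k0 D
  (q : V -> 'rV[R]_D) :
  k0 \in Vt ->
  (forall i, i \in Vt -> rsubmx (p i) = p0) ->
  affdim p Vt = dt%:Z ->
  (forall i, i \notin Vt -> affdim p [set k in Vt | e i k] = dt%:Z) ->
  (forall i j, i \in Vt -> j \in Vt -> sqd (q i) (q j) = sqd (p i) (p j)) ->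
  (forall i j, e i j -> sqd (q i) (q j) = sqd (p i) (p j)) ->
  exists (Psi : 'M[R]_(dt, D)) (r : V -> 'rV[R]_D),
   [/\ Psi *m Psi^T = 1%:M,
    (forall i, q i - q k0 = (lsubmx (p i) - lsubmx (p k0)) *m Psi + r i),
    (forall i, r i *m Psi^T = 0) &
    (forall i, i \in Vt -> r i = 0)].
Proof.
move=> hk0 hp0 hVt hnb hUR heq.
pose x i := q i - q k0; pose t i := lsubmx (p i) - lsubmx (p k0).
have hpp : forall i k, k \in Vt ->
    sqd (p i) (p k) = ip (t i - t k) (t i - t k) + sqd (rsubmx (p i)) p0.
  by move=> i k hk; rewrite sqd_split sqdE (hp0 k hk) /t subBB.
have hqq : forall i k, sqd (q i) (q k) = ip (x i - x k) (x i - x k).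
  by move=> i k; rewrite sqdE /x subBB.
have hnorm : forall k, k \in Vt -> ip (x k) (x k) = ip (t k) (t k).
  move=> k hk; have := hUR k k0 hk hk0.
  rewrite hqq hpp // hp0 // sqdxx /x /t !subrr !subr0 addr0 //.
have hgram : forall k l, k \in Vt -> l \in Vt -> ip (x k) (x l) = ip (t k) (t l).
  move=> k l hk hl; have := hUR k l hk hl.
  rewrite hqq (hpp k l hl) (hp0 k hk) sqdxx addr0 => h.
  exact: polar h (hnorm k hk) (hnorm l hl).
pose X := \matrix_(a < #|V|) (if enum_val a \in Vt then x (enum_val a) else 0).
pose T := \matrix_(a < #|V|) (if enum_val a \in Vt then t (enum_val a) else 0).
have hG : X *m X^T = T *m T^T.
  apply/matrixP => a b; rewrite !mxE.
  have -> : \sum_j X a j * X^T j b = ip (row a X) (row b X).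
    by rewrite ipE; apply: eq_bigr => j _; rewrite !mxE.
  have -> : \sum_j T a j * T^T j b = ip (row a T) (row b T).
    by rewrite ipE; apply: eq_bigr => j _; rewrite !mxE.
  rewrite !rowK; case: ifP => ha; case: ifP => hb; rewrite ?ip0l ?ip0r //.
  exact: hgram.
have hT : row_full T.
  rewrite -sub1mx; apply: submx_trans (full_span hp0 hVt) _.
  apply: span_le => k l hk hl.
  have -> : lsubmx (p k) - lsubmx (p l) = row (enum_rank k) T - row (enum_rank l) T.
    by rewrite !rowK !enum_rankK hk hl /t subBB.
  by rewrite !rowE -mulmxBl submxMl.
have [Psi [hTP hPP]] := gram hG hT.
have hx : forall k, k \in Vt -> x k = t k *m Psi.
  move=> k hk; have := congr1 (row (enum_rank k)) hTP.
  by rewrite row_mul !rowK enum_rankK hk.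
exists Psi, (fun i => x i - t i *m Psi); split => //.
- by move=> i; rewrite addrCA subrr addr0.
- move=> i; rewrite mulmxBl -mulmxA hPP mulmx1.
  case: (boolP (i \in Vt)) => hi; first by rewrite hx // -mulmxA hPP mulmx1 subrr.
  set w := x i *m Psi^T - t i.
  have hN : forall k, k \in [set k in Vt | e i k] -> rsubmx (p k) = p0.
    by move=> k; rewrite inE => /andP [hk _]; apply: hp0.
  apply: (ortho_full (full_span hN (hnb i hi))).
  apply: span_le => k l; rewrite !inE => /andP [hk hik] /andP [hl hil].
  apply/sub_kermxP; apply: ip_mx0.
  have -> : lsubmx (p k) - lsubmx (p l) = t k - t l by rewrite /t subBB.
  rewrite /w ipBr ipMr trmxK mulmxBl -hx // -hx // ipC.
  have E1 := heq i k hik; have E2 := heq i l hil.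
  rewrite hqq hpp // ipBB (hnorm k hk) in E1.
  rewrite hqq hpp // ipBB (hnorm l hl) in E2.
  rewrite (ipBB (t i) (t k)) in E1; rewrite (ipBB (t i) (t l)) in E2.
  rewrite (ipBr (x k) (x l) (x i)) (ipBl (t k) (t l) (t i)) (ipC (t k) (t i)) (ipC (t l) (t i)).
  lra.
- by move=> i hi; rewrite hx // subrr.
Qed.

Lemma pyth (R : rcfType) dt D (Psi : 'M[R]_(dt, D)) (u : 'rV[R]_dt) (s : 'rV[R]_D) :
  Psi *m Psi^T = 1%:M -> s *m Psi^T = 0 ->
  ip (u *m Psi + s) (u *m Psi + s) = ip u u + ip s s.
Proof.
move=> hP hs; rewrite !ipDl !ipDr.
rewrite (ipMl u Psi (u *m Psi)) -mulmxA hP mulmx1.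
rewrite (ipMl u Psi s) hs ip0r (ipC s) (ipMl u Psi s) hs ip0r.
by rewrite addr0 add0r.
Qed.

Lemma cone_mem (V : finType) (Vt : {set V}) (i : V) :
  (if i \in Vt then None else Some i) \in cone_verts Vt.
Proof. by rewrite /cone_verts; case: ifP => h; rewrite inE ?h. Qed.

Theorem mainTheorem11 (R : rcfType) (V : finType) (e : rel V)
  (e_sym : symmetric e) (e_irr : irreflexive e)
  (dt d2 : nat) (p : V -> 'rV[R]_(dt + d2)) (Vt : {set V}) (p0 : 'rV[R]_d2)
  (hspan : affdim p [set: V] = (dt + d2)%N%:Z)
  (hlt : (dt < dt + d2)%N)
  (hUR : univ_rigid e Vt p)
  (hVt : affdim p Vt = dt%:Z)
  (hp0 : forall i, i \in Vt -> rsubmx (p i) = p0)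
  (hnb : forall i, i \notin Vt -> affdim p [set k in Vt | e i k] = dt%:Z) :
  (univ_rigid e [set: V] p <->
     univ_rigid (cone_rel e) (cone_verts Vt) (cone_conf p0 p)) /\
  (dim_rigid e [set: V] p <->
     dim_rigid (cone_rel e) (cone_verts Vt) (cone_conf p0 p)).
Proof.
have [/set0Pn [k0 hk0] _] := affdim_nonneg hVt.
pose aof i := if i \in Vt then None else Some i.
pose cp := cone_conf p0 p.
have haof : forall i, aof i \in cone_verts Vt by move=> i; apply: cone_mem.
have hcp : forall i, cp (aof i) = rsubmx (p i).
  by move=> i; rewrite /cp /aof; case: ifP => h //=; rewrite hp0.
have hsurj : forall a, a \in cone_verts Vt -> exists i, a = aof i.
  case=> [i|] ha; last by exists k0; rewrite /aof hk0.
  by exists i; move: ha; rewrite /aof inE => /negbTE ->.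
have hsplit : forall i j, sqd (p i) (p j) =
    sqd (lsubmx (p i)) (lsubmx (p j)) + sqd (cp (aof i)) (cp (aof j)).
  by move=> i j; rewrite sqd_split !hcp.
have hconeN : cone_verts Vt != set0 by apply/set0Pn; exists None; rewrite inE.
have hTN : [set: V] != set0 by apply/set0Pn; exists k0; rewrite inE.
have hfw : forall D (q' : option V -> 'rV[R]_D),
    equiv_on (cone_rel e) (cone_verts Vt) cp q' ->
    forall i j, e i j -> sqd (q' (aof i)) (q' (aof j)) = sqd (cp (aof i)) (cp (aof j)).
  move=> D q' hq i j hij; rewrite /aof.
  case: (boolP (i \in Vt)) => hi; case: (boolP (j \in Vt)) => hj.
  - by rewrite !sqdxx.
  - by apply: hq; rewrite ?inE.
  - by apply: hq; rewrite ?inE.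
  - by apply: hq; rewrite ?inE.
pose qq D (q' : option V -> 'rV[R]_D) i : 'rV[R]_(dt + D) :=
  row_mx (lsubmx (p i)) (q' (aof i)).
have hqq : forall D (q' : option V -> 'rV[R]_D),
    equiv_on (cone_rel e) (cone_verts Vt) cp q' -> equiv_on e [set: V] p (qq D q').
  move=> D q' hq i j _ _ hij.
  by rewrite /qq sqd_row_mx hsplit (hfw D q' hq i j hij).
have hback : forall D (q : V -> 'rV[R]_D), equiv_on e [set: V] p q ->
   exists (r' : option V -> 'rV[R]_D) (Psi : 'M[R]_(dt, D)) (r : V -> 'rV[R]_D),
   [/\ equiv_on (cone_rel e) (cone_verts Vt) cp r',
     (forall i, r' (aof i) = r i),
     (forall i j, sqd (q i) (q j) = sqd (lsubmx (p i)) (lsubmx (p j)) + sqd (r i) (r j)) &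
     (forall i j, q i - q j = (lsubmx (p i) - lsubmx (p j)) *m Psi + (r i - r j))].
  move=> D q hq.
  have hq' : forall i j, e i j -> sqd (q i) (q j) = sqd (p i) (p j).
    by move=> i j hij; apply: hq; rewrite ?inE.
  have hqVt : forall i j, i \in Vt -> j \in Vt -> sqd (q i) (q j) = sqd (p i) (p j).
    by apply: hUR => i j _ _; apply: hq'.
  have [Psi [r [hPP hqr hrP hr0]]] := decomp hk0 hp0 hVt hnb hqVt hq'.
  pose r' a := if a is Some i then r i else 0.
  have hr' : forall i, r' (aof i) = r i.
    by move=> i; rewrite /aof; case: ifP => h //=; rewrite hr0.
  have hdiff : forall i j, q i - q j = (lsubmx (p i) - lsubmx (p j)) *m Psi + (r i - r j).
    move=> i j; rewrite -(subBB (q i) (q j) (q k0)) !hqr opprD addrACA -mulmxBl.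
    by rewrite subBB.
  have hform : forall i j,
      sqd (q i) (q j) = sqd (lsubmx (p i)) (lsubmx (p j)) + sqd (r i) (r j).
    move=> i j; rewrite sqdE hdiff pyth // ?sqdE //.
    by rewrite mulmxBl !hrP subrr.
  exists r', Psi, r; split => //.
  case=> [i|] [j|] ha hb //= hab.
  - by have := hq' i j hab; rewrite hform hsplit -!hr' /aof; move: ha hb; rewrite !inE => /negbTE -> /negbTE -> /addrI.
  - move: ha; rewrite inE => hi.
    have [/set0Pn [k hk'] _] := affdim_nonneg (hnb i hi).
    move: hk'; rewrite inE => /andP [hk hik].
    have := hq' i k hik; rewrite hform hsplit !hcp (hr0 k hk) (hp0 k hk).
    by move/addrI.
  - move: hb; rewrite inE => hj.
    have [/set0Pn [k hk'] _] := affdim_nonneg (hnb j hj).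
    move: hk'; rewrite inE => /andP [hk hjk].
    have := hq' j k hjk; rewrite hform hsplit !hcp (hr0 k hk) (hp0 k hk).
    by move/addrI => h; rewrite sqdC h sqdC.
split; split.
- move=> hG D q' hq a b ha hb.
  have [i ->] := hsurj a ha; have [j ->] := hsurj b hb.
  have := hG _ (qq D q') (hqq D q' hq) i j (in_setT i) (in_setT j).
  by rewrite /qq sqd_row_mx hsplit => /addrI.
- move=> hC D q hq i j _ _.
  have [r' [Psi [r [hr'eq hr' hform _]]]] := hback D q hq.
  have := hC D r' hr'eq (aof i) (aof j) (haof i) (haof j).
  by rewrite !hr' -/cp !hcp hform sqd_split => ->.
- move=> hG D q' hq.
  have hd := hG _ (qq D q') (hqq D q' hq).
  rewrite (affdimE _ hTN) hspan lez_nat in hd.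
  rewrite (affdimE _ hconeN) (affdimE _ hconeN) lez_nat.
  apply: (@leq_trans d2).
  + set Sq := spn (qq D q') [set: V] in hd *.
    pose B := col_mx (0 : 'M[R]_(dt, D)) (1%:M : 'M[R]_D).
    pose L := row_mx (1%:M : 'M[R]_dt) (0 : 'M[R]_(dt, D)).
    have hqB : forall i, qq D q' i *m B = q' (aof i).
      by move=> i; rewrite /qq /B mul_row_col mulmx0 mulmx1 add0r.
    have hLS : (L <= Sq)%MS.
      rewrite -[L]mul1mx; apply: submx_trans (submxMr L (full_span hp0 hVt)) _.
      apply: span_mul_le => k l hk hl.
      have -> : (lsubmx (p k) - lsubmx (p l)) *m L = qq D q' k - qq D q' l.
        by rewrite /L /qq mul_mx_row mulmx1 mulmx0 opp_row_mx add_row_mx /aof hk hl subrr.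
      by apply: span_sub; rewrite inE.
    have hLK : (L <= kermx B)%MS.
      by apply/sub_kermxP; rewrite /L /B mul_row_col mulmx0 mul0mx addr0.
    have hrL : (dt <= \rank L)%N.
      have e1 : L *m col_mx (1%:M : 'M[R]_dt) (0 : 'M[R]_(D, dt)) = 1%:M.
        by rewrite /L mul_row_col mulmx1 mulmx0 addr0.
      by have := mxrankM_maxl L (col_mx (1%:M : 'M[R]_dt) (0 : 'M[R]_(D, dt))); rewrite e1 mxrank1.
    have hcap : (\rank L <= \rank (Sq :&: kermx B))%N.
      by apply: mxrankS; rewrite sub_capmx hLS hLK.
    have hker := mxrank_mul_ker Sq B.
    have hq'S : (spn q' (cone_verts Vt) <= Sq *m B)%MS.
      apply: span_le => a b ha hb.
      have [i ->] := hsurj a ha; have [j ->] := hsurj b hb.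
      by rewrite -!hqB -mulmxBl; apply: submxMr; apply: span_sub; rewrite inE.
    move: (mxrankS hq'S) hd hrL hcap hker; move: (\rank (spn q' _)) (\rank Sq) (\rank L) (\rank (Sq :&: _)) (\rank (Sq *m B)) => a b c d f; lia.
  + have [_ hrp] := affdim_nonneg hspan.
    pose L := row_mx (1%:M : 'M[R]_dt) (0 : 'M[R]_(dt, d2)).
    pose R2 := row_mx (0 : 'M[R]_(d2, dt)) (1%:M : 'M[R]_d2).
    have hS : (spn p [set: V] <= L + spn cp (cone_verts Vt) *m R2)%MS.
      apply: span_le => i j _ _; rewrite diff_row -!hcp.
      set a := (_ - _ : 'rV[R]_dt); set b := (_ - _ : 'rV[R]_d2).
      have -> : row_mx a b = a *m L + b *m R2.
        by rewrite /L /R2 !mul_mx_row !mulmx1 !mulmx0 add_row_mx addr0 add0r.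
      apply: addmx_sub_adds; first exact: submxMl.
      by apply: submxMr; apply: span_sub.
    have h1 := mxrankS hS.
    have h2 := (mxrank_adds_leqif L (spn cp (cone_verts Vt) *m R2)).1.
    have h3 := rank_leq_row L.
    have h4 := mxrankM_maxl (spn cp (cone_verts Vt)) R2.
    move: h1 h2 h3 h4 hrp; move: (\rank (spn p _)) (\rank (L + _)%MS) (\rank L)
      (\rank (spn cp _ *m R2)) (\rank (spn cp _)) => a b c f g; lia.
- move=> hC D q hq.
  have [r' [Psi [r [hr'eq hr' hform hdiff]]]] := hback D q hq.
  have hc := hC D r' hr'eq; rewrite !(affdimE _ hconeN) lez_nat in hc.
  rewrite (affdimE _ hTN) hspan lez_nat.
  have hS : (spn q [set: V] <= Psi + spn r' (cone_verts Vt))%MS.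
    apply: span_le => i j _ _; rewrite hdiff; apply: addmx_sub_adds.
      exact: submxMl.
    by rewrite -!hr'; apply: span_sub.
  have h1 := mxrankS hS.
  have h2 := (mxrank_adds_leqif Psi (spn r' (cone_verts Vt))).1.
  have h3 := rank_leq_row Psi.
  have h4 := rank_leq_col (spn cp (cone_verts Vt)).
  move: h1 h2 h3 h4 hc; move: (\rank (spn q _)) (\rank (Psi + _)%MS) (\rank Psi)
      (\rank (spn r' _)) (\rank (spn cp _)) => a b c f g; lia.
Qed.
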